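(* Assume $k_{+\infty}=k_{-\infty}$, that $k^2(x)>0$ for all $x$ (no classically forbidden region), and that $k=\sqrt{k^2}$ is twice continuously differentiable. Then $$T\ \ge\ \mathrm{sech}^2\left\{\frac12\int_{-\infty}^{\infty}\left|\frac{1}{\sqrt{k}}\left(\frac{1}{\sqrt{k}}\right)''\right|\mathrm{d}x\right\}.$$
   Context: Standing setup: $k^2:\mathbb{R}\to\mathbb{R}$ is a function with $k^2(x)\to k_{\pm\infty}^2$ as $x\to\pm\infty$, where $k_{\pm\infty}>0$ and $k^2-k_{\pm\infty}^2$ is integrable near $\pm\infty$. For the equation $u''+k^2(x)u=0$ there is a solution with $u(x)=e^{ik_{-\infty}x}+r\,e^{-ik_{-\infty}x}+o(1)$ as $x\to-\infty$ and $u(x)=\tau\,e^{ik_{+\infty}x}+o(1)$ as $x\to+\infty$; the transmission probability is $T=(k_{+\infty}/k_{-\infty})|\tau|^2$. Here $\mathrm{sech}=1/\cosh$, and if the integral equals $+\infty$ the bound is read as the trivial statement $T\ge 0$. *)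

(* Defs.v *)
From Stdlib Require Import Reals Lra.
Open Scope R_scope.

Definition sech (x : R) : R := / cosh x.

Definition lim_pinf (f : R -> R) (l : R) : Prop :=
  forall eps, 0 < eps -> exists M, forall x, M <= x -> Rabs (f x - l) < eps.
Definition lim_minf (f : R -> R) (l : R) : Prop :=
  forall eps, 0 < eps -> exists M, forall x, x <= M -> Rabs (f x - l) < eps.

Definition RInt_eq (f : R -> R) (a b v : R) : Prop :=
  exists pr : Riemann_integrable f a b, RiemannInt pr = v.

Definition integrable_near_pinf (f : R -> R) : Prop :=
  exists a B, forall b, a <= b ->
    (exists v, RInt_eq f a b v) /\
    (exists v, RInt_eq (fun x => Rabs (f x)) a b v /\ v <= B).
Definition integrable_near_minf (f : R -> R) : Prop :=
  exists a B, forall b, b <= a ->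
    (exists v, RInt_eq f b a v) /\
    (exists v, RInt_eq (fun x => Rabs (f x)) b a v /\ v <= B).

Definition improper_integral (f : R -> R) (I : R) : Prop :=
  forall eps, 0 < eps -> exists M, forall a b, a <= - M -> M <= b ->
    exists v, RInt_eq f a b v /\ Rabs (v - I) < eps.

Definition C2 (f : R -> R) : Prop :=
  exists f1 f2 : R -> R,
    (forall x, derivable_pt_lim f x (f1 x)) /\
    (forall x, derivable_pt_lim f1 x (f2 x)) /\
    continuity f2.

(* transmission probability T = (k_{+oo}/k_{-oo}) |tau|^2, tau = tr + i ti *)
Definition transmission (kp km tr ti : R) : R := (kp / km) * (tr ^ 2 + ti ^ 2).

(* u = ur + i ui is a solution of u'' + k2 u = 0 with first derivatives
   ur1, ui1 and second derivatives ur2, ui2 *)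
Definition is_solution (k2 ur ui ur1 ui1 ur2 ui2 : R -> R) : Prop :=
  forall x,
    derivable_pt_lim ur x (ur1 x) /\ derivable_pt_lim ur1 x (ur2 x) /\
    derivable_pt_lim ui x (ui1 x) /\ derivable_pt_lim ui1 x (ui2 x) /\
    ur2 x + k2 x * ur x = 0 /\ ui2 x + k2 x * ui x = 0.

(* u(x) = e^{i km x} + r e^{-i km x} + o(1) as x -> -oo, r = rr + i ri *)
Definition left_asymptotics (km rr ri : R) (ur ui : R -> R) : Prop :=
  lim_minf (fun x => ur x - (cos (km * x) + rr * cos (km * x) + ri * sin (km * x))) 0 /\
  lim_minf (fun x => ui x - (sin (km * x) + ri * cos (km * x) - rr * sin (km * x))) 0.

(* u(x) = tau e^{i kp x} + o(1) as x -> +oo, tau = tr + i ti *)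
Definition right_asymptotics (kp tr ti : R) (ur ui : R -> R) : Prop :=
  lim_pinf (fun x => ur x - (tr * cos (kp * x) - ti * sin (kp * x))) 0 /\
  lim_pinf (fun x => ui x - (ti * cos (kp * x) + tr * sin (kp * x))) 0.

(* Main.v *)
Require Import Defs.
From Stdlib Require Import Reals Lra Psatz FunctionalExtensionality.
Open Scope R_scope.

Notation D := derivable_pt_lim.

Lemma dext f x l l' : D f x l -> l = l' -> D f x l'.
Proof. intros H ->; exact H. Qed.
Lemma dfext f h x l : (forall y, f y = h y) -> D f x l -> D h x l.
Proof. intros E H. replace h with f; [exact H|]. apply functional_extensionality; exact E. Qed.
Lemma dmul f h x a b : D f x a -> D h x b -> D (fun y => f y * h y) x (a * h x + f x * b).
Proof. intros; apply (derivable_pt_lim_mult f h); auto. Qed.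
Lemma dplus f h x a b : D f x a -> D h x b -> D (fun y => f y + h y) x (a + b).
Proof. intros; apply (derivable_pt_lim_plus f h); auto. Qed.
Lemma dminus f h x a b : D f x a -> D h x b -> D (fun y => f y - h y) x (a - b).
Proof. intros; apply (derivable_pt_lim_minus f h); auto. Qed.
Lemma dopp f x a : D f x a -> D (fun y => - f y) x (- a).
Proof. intros; apply (derivable_pt_lim_opp f); auto. Qed.
Lemma dconst c x : D (fun _ => c) x 0.
Proof. apply (derivable_pt_lim_const c). Qed.
Lemma did x : D (fun y => y) x 1.
Proof. apply derivable_pt_lim_id. Qed.
Lemma dcomp f h x a b : D f x a -> D h (f x) b -> D (fun y => h (f y)) x (b * a).
Proof. intros; apply (derivable_pt_lim_comp f h); auto. Qed.
Lemma dinv f x a : D f x a -> f x <> 0 -> D (fun y => / f y) x (- a / (f x)^2).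
Proof.
  intros H Hn. apply (dfext (fct_cte 1 / f)%F).
  { intro; unfold div_fct, fct_cte, Rdiv; ring. }
  eapply dext. { apply derivable_pt_lim_div. apply derivable_pt_lim_const. exact H. exact Hn. }
  unfold fct_cte, Rsqr; field; auto.
Qed.
Lemma dsqrt f x a : D f x a -> 0 < f x -> D (fun y => sqrt (f y)) x (a / (2 * sqrt (f x))).
Proof.
  intros H Hp. eapply dext. { apply dcomp; [exact H| apply derivable_pt_lim_sqrt; auto]. }
  unfold Rdiv; ring.
Qed.
Lemma dln f x a : D f x a -> 0 < f x -> D (fun y => ln (f y)) x (a / f x).
Proof.
  intros H Hp. eapply dext. { apply dcomp; [exact H| apply derivable_pt_lim_ln; auto]. }
  unfold Rdiv; ring.
Qed.
Lemma dcos c x : D (fun y => cos (c * y)) x (- c * sin (c * x)).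
Proof.
  eapply dext. { apply dcomp with (h := cos). 2: apply derivable_pt_lim_cos.
   eapply dext. { apply dmul; [apply dconst| apply did]. } reflexivity. } ring.
Qed.
Lemma dsin c x : D (fun y => sin (c * y)) x (c * cos (c * x)).
Proof.
  eapply dext. { apply dcomp with (h := sin). 2: apply derivable_pt_lim_sin.
   eapply dext. { apply dmul; [apply dconst| apply did]. } reflexivity. } ring.
Qed.

Lemma dcont f x l : D f x l -> continuity_pt f x.
Proof. intro H. apply derivable_continuous_pt. exists l; exact H. Qed.

Lemma cmp (F F' f : R -> R) (c a b : R) (pr : Riemann_integrable f a b) :
  a <= b -> 0 <= c -> (forall x, continuity_pt f x) ->
  (forall x, D F x (F' x)) -> (forall x, a <= x <= b -> 0 <= F' x + c * f x) ->
  F a - F b <= c * RiemannInt pr.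
Proof.
  intros hab hc hf hF hF'.
  destruct hab as [hab| <-].
  2:{ rewrite RiemannInt_P9. lra. }
  assert (C0 : forall x, a <= x <= b -> continuity_pt f x) by auto.
  set (h := Rlt_le _ _ hab).
  set (P := primitive h (FTC_P1 h C0)).
  assert (HP : RiemannInt pr = P b - P a).
  { unfold P. rewrite <- (RiemannInt_P20 h (FTC_P1 h C0) pr). reflexivity. }
  destruct (MVT_cor2 (fun y => F y + c * P y) (fun y => F' y + c * f y) a b hab) as [z [Hz1 Hz2]].
  { intros z Hz. apply dplus. apply hF. eapply dext. apply dmul. apply dconst.
    apply RiemannInt_P28. exact Hz. cbv beta; ring. }
  assert (0 <= F' z + c * f z) by (apply hF'; lra).
  rewrite HP. nra.
Qed.

Lemma dpow2 f x a : D f x a -> D (fun y => f y ^ 2) x (2 * f x * a).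
Proof. intro H. eapply dext. apply (dfext (fun y => f y * f y)). intro; ring.
  apply dmul; exact H. ring. Qed.

Ltac dstep := first [ apply dconst | apply did | eassumption |
  match goal with H : forall x, D ?f x _ |- D ?f _ _ => apply H end
  | apply dpow2 | apply dminus | apply dplus | apply dopp | apply dmul
  | apply dinv | apply dsqrt | apply dln ].

Definition Vf (g g1 u u1 : R -> R) x := g x * u1 x - g1 x * u x.
Definition EE g g1 ur ui ur1 ui1 x := / 2 * ((ur x * / g x)^2 + (ui x * / g x)^2
   + (Vf g g1 ur ur1 x)^2 + (Vf g g1 ui ui1 x)^2).
Definition DQ g g1 ur ui ur1 ui1 x := ur x * / g x * Vf g g1 ur ur1 x + ui x * / g x * Vf g g1 ui ui1 x.
Definition CC (ur ui ur1 ui1 : R -> R) x := ur x * ui1 x - ui x * ur1 x.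

Section Core.
Variables (k2 g g1 g2 ur ui ur1 ui1 ur2 ui2 : R -> R).
Hypothesis hg : forall x, 0 < g x.
Hypothesis hk : forall x, k2 x * g x ^ 4 = 1.
Hypothesis Dg : forall x, D g x (g1 x).
Hypothesis Dg1 : forall x, D g1 x (g2 x).
Hypothesis hsol : is_solution k2 ur ui ur1 ui1 ur2 ui2.

Lemma DEE x : D (EE g g1 ur ui ur1 ui1) x (- (g x * g2 x) * DQ g g1 ur ui ur1 ui1 x).
Proof.
  destruct (hsol x) as (h1 & h2 & h3 & h4 & h5 & h6).
  assert (gx := hg x). assert (kx := hk x).
  unfold EE, Vf.
  eapply dext. { repeat dstep. all: apply Rgt_not_eq; auto. }
  unfold DQ, Vf. cbv beta.
  assert (ur2 x = - k2 x * ur x) by lra.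
  assert (ui2 x = - k2 x * ui x) by lra.
  assert (k2 x = / g x ^ 4). { field_simplify_eq; [lra| apply Rgt_not_eq; auto]. }
  rewrite H, H0, H1. field. apply Rgt_not_eq; auto.
Qed.

Lemma DCC x : D (CC ur ui ur1 ui1) x 0.
Proof.
  destruct (hsol x) as (h1 & h2 & h3 & h4 & h5 & h6).
  unfold CC. eapply dext. { repeat dstep. }
  cbv beta. replace (ur2 x) with (- k2 x * ur x) by lra.
  replace (ui2 x) with (- k2 x * ui x) by lra. ring.
Qed.

Lemma ineqEE x : (DQ g g1 ur ui ur1 ui1 x)^2 + (CC ur ui ur1 ui1 x)^2 <= (EE g g1 ur ui ur1 ui1 x)^2.
Proof.
  assert (gx := hg x).
  assert (CC ur ui ur1 ui1 x = ur x * / g x * Vf g g1 ui ui1 x - ui x * / g x * Vf g g1 ur ur1 x).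
  { unfold CC, Vf. field. lra. }
  rewrite H. unfold DQ, EE.
  set (a := ur x * / g x). set (b := ui x * / g x). set (c := Vf g g1 ur ur1 x).
  set (d := Vf g g1 ui ui1 x).
  assert (0 <= (a^2+b^2-c^2-d^2)^2) by (apply pow2_ge_0).
  assert ((/ 2 * (a ^ 2 + b ^ 2 + c ^ 2 + d ^ 2)) ^ 2 - ((a * c + b * d) ^ 2 + (a * d - b * c) ^ 2)
    = / 4 * (a^2+b^2-c^2-d^2)^2) by field.
  lra.
Qed.

Lemma EE_nonneg x : 0 <= EE g g1 ur ui ur1 ui1 x.
Proof. unfold EE. nra. Qed.
End Core.

Lemma DPhi E E' c d x : D E x E' -> 0 < E x ^ 2 - c ^ 2 + d -> 0 <= E x ->
  D (fun y => ln (E y + sqrt (E y ^ 2 - c ^ 2 + d))) x (E' / sqrt (E x ^ 2 - c ^ 2 + d)).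
Proof.
  intros H h1 h2.
  assert (0 < sqrt (E x ^ 2 - c ^ 2 + d)) by (apply sqrt_lt_R0; auto).
  eapply dext. { apply dln. 2:{ lra. } repeat dstep. }
  cbv beta.
  assert (sqrt (E x ^ 2 - c ^ 2 + d) * sqrt (E x ^ 2 - c ^ 2 + d) = E x ^ 2 - c ^ 2 + d) by (apply sqrt_sqrt; lra).
  field. split; lra.
Qed.

Lemma cv_ext u l l' : Un_cv u l -> l = l' -> Un_cv u l'.
Proof. intros H ->; exact H. Qed.
Lemma cv_const c : Un_cv (fun _ => c) c.
Proof. intros eps he. exists 0%nat. intros. unfold Rdist. rewrite Rminus_diag, Rabs_R0. lra. Qed.
Lemma cv_inv u l : Un_cv u l -> l <> 0 -> Un_cv (fun n => / u n) (/ l).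
Proof.
  intros H hl. apply (continuity_seq Rinv u l); auto.
  eapply dcont. apply (dinv (fun y => y)). apply did. exact hl.
Qed.
Lemma cv_fext u v l : (forall n, u n = v n) -> Un_cv u l -> Un_cv v l.
Proof. intros E H. replace v with u; [exact H|]. apply functional_extensionality; exact E. Qed.

Lemma seq_pinf (s : nat -> R) f l : (forall M, exists N, forall n, (n >= N)%nat -> M <= s n) ->
  lim_pinf f l -> Un_cv (fun n => f (s n)) l.
Proof.
  intros hs hf eps he. destruct (hf eps he) as [M HM]. destruct (hs M) as [N HN].
  exists N. intros n hn. unfold Rdist. apply HM. apply HN. lia.
Qed.
Lemma seq_minf (s : nat -> R) f l : (forall M, exists N, forall n, (n >= N)%nat -> s n <= M) ->
  lim_minf f l -> Un_cv (fun n => f (s n)) l.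
Proof.
  intros hs hf eps he. destruct (hf eps he) as [M HM]. destruct (hs M) as [N HN].
  exists N. intros n hn. unfold Rdist. apply HM. apply HN. lia.
Qed.

Definition sp (k : R) (n : nat) := 2 * INR n * PI / k.

Lemma sp_cos k n : 0 < k -> cos (k * sp k n) = 1.
Proof.
  intro hk. unfold sp. replace (k * (2 * INR n * PI / k)) with (0 + 2 * INR n * PI) by (field; lra).
  rewrite cos_period. apply cos_0.
Qed.
Lemma sp_sin k n : 0 < k -> sin (k * sp k n) = 0.
Proof.
  intro hk. unfold sp. replace (k * (2 * INR n * PI / k)) with (0 + 2 * INR n * PI) by (field; lra).
  rewrite sin_period. apply sin_0.
Qed.
Lemma sm_cos k n : 0 < k -> cos (k * - sp k n) = 1.
Proof. intro hk. replace (k * - sp k n) with (- (k * sp k n)) by ring. rewrite cos_neg. apply sp_cos; auto. Qed.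
Lemma sm_sin k n : 0 < k -> sin (k * - sp k n) = 0.
Proof. intro hk. replace (k * - sp k n) with (- (k * sp k n)) by ring. rewrite sin_neg, sp_sin; auto. ring. Qed.

Lemma sp_div k : 0 < k -> forall M, exists N, forall n, (n >= N)%nat -> M <= sp k n.
Proof.
  intros hk M. destruct (INR_unbounded (M * k / (2 * PI))) as [N HN]. exists N.
  intros n hn. apply le_INR in hn. unfold sp. assert (hpi := PI_RGT_0).
  apply Rmult_le_reg_r with (k / (2*PI)). { apply Rdiv_lt_0_compat; lra. }
  replace (2 * INR n * PI / k * (k / (2 * PI))) with (INR n) by (field; lra).
  unfold Rdiv in *. lra.
Qed.
Lemma sm_div k : 0 < k -> forall M, exists N, forall n, (n >= N)%nat -> - sp k n <= M.
Proof.
  intros hk M. destruct (sp_div k hk (- M)) as [N HN]. exists N. intros n hn. specialize (HN n hn). lra.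
Qed.

Lemma cont_eps h l : continuity_pt h l -> forall eps, 0 < eps -> exists del, 0 < del /\
  forall y, Rabs (y - l) < del -> Rabs (h y - h l) < eps.
Proof.
  intros H eps he. destruct (H eps he) as [del [hd Hd]]. exists del. split; [lra|].
  intros y hy. destruct (Req_dec y l) as [->|hne].
  - rewrite Rminus_diag, Rabs_R0; lra.
  - apply (Hd y). split; [split; [exact I| auto]| exact hy].
Qed.

Lemma lim_pinf_comp f h l : lim_pinf f l -> continuity_pt h l -> lim_pinf (fun x => h (f x)) (h l).
Proof.
  intros hf hc eps he. destruct (cont_eps h l hc eps he) as [del [hd Hd]].
  destruct (hf del hd) as [M HM]. exists M. intros x hx. apply Hd, HM, hx.
Qed.
Lemma lim_minf_comp f h l : lim_minf f l -> continuity_pt h l -> lim_minf (fun x => h (f x)) (h l).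
Proof.
  intros hf hc eps he. destruct (cont_eps h l hc eps he) as [del [hd Hd]].
  destruct (hf del hd) as [M HM]. exists M. intros x hx. apply Hd, HM, hx.
Qed.

Lemma landau_pinf (p p1 p2 : R -> R) : (forall x, D p x (p1 x)) -> (forall x, D p1 x (p2 x)) ->
  lim_pinf p 0 -> lim_pinf p2 0 -> lim_pinf p1 0.
Proof.
  intros h1 h2 hp hp2 eps he.
  destruct (hp (eps/4)) as [M1 H1]. lra. destruct (hp2 (eps/2)) as [M2 H2]. lra.
  exists (Rmax M1 M2). intros x hx.
  assert (M1 <= x) by (eapply Rle_trans; [apply Rmax_l| exact hx]).
  assert (M2 <= x) by (eapply Rle_trans; [apply Rmax_r| exact hx]).
  destruct (MVT_cor2 p p1 x (x+1)) as [z [hz1 hz2]]. lra. intros; apply h1.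
  destruct (MVT_cor2 p1 p2 x z) as [w [hw1 hw2]]. lra. intros; apply h2.
  assert (a1 := H1 x ltac:(lra)). assert (a2 := H1 (x+1) ltac:(lra)).
  assert (a3 := H2 w ltac:(lra)).
  rewrite Rminus_0_r in *.
  replace (x + 1 - x) with 1 in hz1 by ring.
  assert (Rabs (p1 z) < eps / 2).
  { rewrite Rmult_1_r in hz1. rewrite <- hz1. unfold Rminus. eapply Rle_lt_trans. apply Rabs_triang.
    rewrite Rabs_Ropp. lra. }
  assert (Rabs (p1 z - p1 x) < eps / 2).
  { rewrite hw1, Rabs_mult. rewrite (Rabs_right (z - x)) by lra.
    assert (0 <= Rabs (p2 w)) by apply Rabs_pos. nra. }
  replace (p1 x) with (p1 z - (p1 z - p1 x)) by ring.
  unfold Rminus at 1. eapply Rle_lt_trans. apply Rabs_triang. rewrite Rabs_Ropp. lra.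
Qed.

Lemma landau_minf (p p1 p2 : R -> R) : (forall x, D p x (p1 x)) -> (forall x, D p1 x (p2 x)) ->
  lim_minf p 0 -> lim_minf p2 0 -> lim_minf p1 0.
Proof.
  intros h1 h2 hp hp2 eps he.
  destruct (hp (eps/4)) as [M1 H1]. lra. destruct (hp2 (eps/2)) as [M2 H2]. lra.
  exists (Rmin M1 M2). intros x hx.
  assert (x <= M1) by (eapply Rle_trans; [exact hx | apply Rmin_l]).
  assert (x <= M2) by (eapply Rle_trans; [exact hx | apply Rmin_r]).
  destruct (MVT_cor2 p p1 (x-1) x) as [z [hz1 hz2]]. lra. intros; apply h1.
  destruct (MVT_cor2 p1 p2 z x) as [w [hw1 hw2]]. lra. intros; apply h2.
  assert (a1 := H1 x ltac:(lra)). assert (a2 := H1 (x-1) ltac:(lra)).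
  assert (a3 := H2 w ltac:(lra)).
  rewrite Rminus_0_r in *.
  replace (x - (x - 1)) with 1 in hz1 by ring.
  assert (Rabs (p1 z) < eps / 2).
  { rewrite Rmult_1_r in hz1. rewrite <- hz1.
    pose proof (Rabs_triang (p x) (- p (x-1))) as T. rewrite Rabs_Ropp in T.
    replace (p x - p (x - 1)) with (p x + - p (x - 1)) by ring. lra. }
  assert (Rabs (p1 x - p1 z) < eps / 2).
  { rewrite hw1, Rabs_mult. rewrite (Rabs_right (x - z)) by lra.
    assert (0 <= Rabs (p2 w)) by apply Rabs_pos. nra. }
  replace (p1 x) with (p1 z + (p1 x - p1 z)) by ring.
  eapply Rle_lt_trans. apply Rabs_triang. lra.
Qed.

Lemma small_bound A B (a b h : R -> R) : 0 <= A -> 0 <= B ->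
  (forall x, Rabs (h x) <= A * Rabs (a x) + Rabs (b x) * (Rabs (a x) + B)) ->
  (forall eps, 0 < eps -> exists del, 0 < del /\ forall y z, Rabs y < del -> Rabs z < del ->
     A * Rabs y + Rabs z * (Rabs y + B) < eps).
Proof.
  intros hA hB _ eps he. exists (Rmin 1 (eps / (A + B + 2))). split.
  { apply Rmin_pos. lra. apply Rdiv_lt_0_compat; lra. }
  intros y z hy hz.
  set (e1 := Rmin 1 (eps / (A + B + 2))) in *.
  assert (e1 <= 1) by apply Rmin_l. assert (e1 <= eps / (A + B + 2)) by apply Rmin_r.
  assert (e1 * (A + B + 2) <= eps).
  { apply Rmult_le_compat_r with (r := A+B+2) in H0; [|lra].
    replace (eps / (A + B + 2) * (A + B + 2)) with eps in H0 by (field; lra). exact H0. }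
  assert (0 <= Rabs y) by apply Rabs_pos. assert (0 <= Rabs z) by apply Rabs_pos.
  nra.
Qed.

Lemma small_pinf A B (a b h : R -> R) : 0 <= A -> 0 <= B ->
  (forall x, Rabs (h x) <= A * Rabs (a x) + Rabs (b x) * (Rabs (a x) + B)) ->
  lim_pinf a 0 -> lim_pinf b 0 -> lim_pinf h 0.
Proof.
  intros hA hB hh ha hb eps he. destruct (small_bound A B a b h hA hB hh eps he) as [del [hd Hd]].
  destruct (ha del hd) as [M1 H1]. destruct (hb del hd) as [M2 H2].
  exists (Rmax M1 M2). intros x hx. rewrite Rminus_0_r.
  assert (M1 <= x) by (eapply Rle_trans; [apply Rmax_l| exact hx]).
  assert (M2 <= x) by (eapply Rle_trans; [apply Rmax_r| exact hx]).
  specialize (H1 x H). specialize (H2 x H0). rewrite Rminus_0_r in H1, H2.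
  eapply Rle_lt_trans. apply hh. apply Hd; auto.
Qed.
Lemma small_minf A B (a b h : R -> R) : 0 <= A -> 0 <= B ->
  (forall x, Rabs (h x) <= A * Rabs (a x) + Rabs (b x) * (Rabs (a x) + B)) ->
  lim_minf a 0 -> lim_minf b 0 -> lim_minf h 0.
Proof.
  intros hA hB hh ha hb eps he. destruct (small_bound A B a b h hA hB hh eps he) as [del [hd Hd]].
  destruct (ha del hd) as [M1 H1]. destruct (hb del hd) as [M2 H2].
  exists (Rmin M1 M2). intros x hx. rewrite Rminus_0_r.
  assert (x <= M1) by (eapply Rle_trans; [exact hx | apply Rmin_l]).
  assert (x <= M2) by (eapply Rle_trans; [exact hx | apply Rmin_r]).
  specialize (H1 x H). specialize (H2 x H0). rewrite Rminus_0_r in H1, H2.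
  eapply Rle_lt_trans. apply hh. apply Hd; auto.
Qed.

Lemma cplus f h x : continuity_pt f x -> continuity_pt h x -> continuity_pt (fun y => f y + h y) x.
Proof. intros; apply (continuity_pt_plus f h); auto. Qed.
Lemma cmul f h x : continuity_pt f x -> continuity_pt h x -> continuity_pt (fun y => f y * h y) x.
Proof. intros; apply (continuity_pt_mult f h); auto. Qed.
Lemma cabs f x : continuity_pt f x -> continuity_pt (fun y => Rabs (f y)) x.
Proof. intros; apply (continuity_pt_comp f Rabs); auto. apply Rcontinuity_abs. Qed.

Section G.
Variables (k2 w1 w2 : R -> R).
Hypothesis hpos : forall x, 0 < k2 x.
Hypothesis hC2 : C2 (fun x => sqrt (k2 x)).
Hypothesis hw1 : forall x, D (fun y => / sqrt (sqrt (k2 y))) x (w1 x).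
Hypothesis hw2 : forall x, D w1 x (w2 x).

Definition gg x := / sqrt (sqrt (k2 x)).

Lemma ss_pos x : 0 < sqrt (sqrt (k2 x)).
Proof. apply sqrt_lt_R0, sqrt_lt_R0, hpos. Qed.

Lemma gg_pos x : 0 < gg x.
Proof. unfold gg. apply Rinv_0_lt_compat, ss_pos. Qed.

Lemma gg4 x : k2 x * gg x ^ 4 = 1.
Proof.
  unfold gg. assert (h := ss_pos x).
  assert (sqrt (sqrt (k2 x)) ^ 4 = k2 x).
  { replace (sqrt (sqrt (k2 x)) ^ 4) with ((sqrt (sqrt (k2 x)) * sqrt (sqrt (k2 x))) * (sqrt (sqrt (k2 x)) * sqrt (sqrt (k2 x)))) by ring.
    rewrite sqrt_sqrt. rewrite sqrt_sqrt. auto. left; apply hpos. left; apply sqrt_lt_R0, hpos. }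
  rewrite pow_inv. rewrite H. field. apply Rgt_not_eq, hpos.
Qed.

Lemma Dgg x : D gg x (w1 x).
Proof. apply hw1. Qed.

Lemma w2_cont : continuity (fun x => w2 x).
Proof.
  destruct hC2 as (f1 & f2 & hf1 & hf2 & hc).
  assert (hs : forall x, D (fun y => sqrt (sqrt (k2 y))) x (f1 x / (2 * sqrt (sqrt (k2 x))))).
  { intro x. apply (dsqrt (fun y => sqrt (k2 y))). apply hf1. apply sqrt_lt_R0, hpos. }
  set (s := fun y => sqrt (sqrt (k2 y))) in *.
  assert (spos := ss_pos).
  set (e1 := fun x => - f1 x / (2 * s x ^ 3)).
  assert (he1 : forall x, w1 x = e1 x).
  { intro x. apply (uniqueness_limite (fun y => / sqrt (sqrt (k2 y))) x). apply hw1.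
    eapply dext. apply dinv. apply hs. apply Rgt_not_eq, spos.
    unfold e1, s. specialize (spos x). field. lra. }
  assert (w1 = e1) by (apply functional_extensionality; exact he1).
  set (A := fun x => - / (2 * s x ^ 3)).
  set (B := fun x => 3 / (4 * s x ^ 5)).
  assert (hw : forall x, w2 x = f2 x * A x + f1 x ^ 2 * B x).
  { intro x. apply (uniqueness_limite w1 x). apply hw2. rewrite H.
    unfold e1, A, B. unfold Rdiv.
    eapply dext. { repeat dstep. apply Rgt_not_eq. specialize (spos x). unfold s. assert (0 < sqrt (sqrt (k2 x)) ^ 3) by (apply pow_lt; lra). lra. }
    cbv beta. unfold s. specialize (spos x). field. lra. }
  assert (w2 = fun x => f2 x * A x + f1 x ^ 2 * B x) by (apply functional_extensionality; exact hw).
  rewrite H0. intro x. specialize (spos x).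
  assert (0 < s x ^ 3) by (apply pow_lt; auto). assert (0 < s x ^ 5) by (apply pow_lt; auto).
  apply cplus; apply cmul.
  - apply hc.
  - eapply dcont. unfold A. repeat dstep. apply Rgt_not_eq; lra.
  - eapply dcont. repeat dstep.
  - eapply dcont. unfold B, Rdiv. repeat dstep. apply Rgt_not_eq; lra.
Qed.

Lemma rho_cont : continuity (fun x => Rabs (gg x * w2 x)).
Proof.
  intro x. apply cabs. apply cmul. eapply dcont. apply Dgg. apply w2_cont.
Qed.

Variables (kinf I : R).
Hypothesis hkinf : 0 < kinf.
Hypothesis hlimp : lim_pinf k2 (kinf ^ 2).
Hypothesis hlimm : lim_minf k2 (kinf ^ 2).
Hypothesis hI : improper_integral (fun x => Rabs (/ sqrt (sqrt (k2 x)) * w2 x)) I.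

Definition rhoa x := Rabs (gg x * w2 x).
Definition gam := / sqrt kinf.

Lemma gam_pos : 0 < gam.
Proof. unfold gam. apply Rinv_0_lt_compat, sqrt_lt_R0; auto. Qed.

Lemma h_cont : continuity_pt (fun y => / sqrt (sqrt y)) (kinf ^ 2).
Proof.
  assert (0 < kinf ^ 2) by (apply pow_lt; auto).
  assert (0 < sqrt (kinf ^ 2)) by (apply sqrt_lt_R0; auto).
  assert (0 < sqrt (sqrt (kinf ^ 2))) by (apply sqrt_lt_R0; auto).
  eapply dcont. repeat dstep; auto. lra.
Qed.

Lemma gam_eq : / sqrt (sqrt (kinf ^ 2)) = gam.
Proof. unfold gam. rewrite sqrt_pow2; auto. lra. Qed.

Lemma gg_limp : lim_pinf gg gam.
Proof. rewrite <- gam_eq. exact (lim_pinf_comp k2 _ _ hlimp h_cont). Qed.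
Lemma gg_limm : lim_minf gg gam.
Proof. rewrite <- gam_eq. exact (lim_minf_comp k2 _ _ hlimm h_cont). Qed.

Lemma gg_lowp : exists M, forall x, M <= x -> gam / 2 <= gg x.
Proof.
  destruct (gg_limp (gam/2)) as [M HM]. assert (h := gam_pos). lra.
  exists M. intros x hx. specialize (HM x hx). apply Rabs_def2 in HM. lra.
Qed.
Lemma gg_lowm : exists M, forall x, x <= M -> gam / 2 <= gg x.
Proof.
  destruct (gg_limm (gam/2)) as [M HM]. assert (h := gam_pos). lra.
  exists M. intros x hx. specialize (HM x hx). apply Rabs_def2 in HM. lra.
Qed.

Lemma rhoa_int a b : a <= b -> Riemann_integrable rhoa a b.
Proof. intro h. apply continuity_implies_RiemannInt; auto. intros; apply rho_cont. Qed.

Lemma tail_p eps : 0 < eps -> exists M, forall x y (pr : Riemann_integrable rhoa x y),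
  M <= x -> x <= y -> RiemannInt pr <= eps.
Proof.
  intros he. destruct (hI (eps/2)) as [M0 HM]. lra.
  exists (Rabs M0). intros x y pr hx hxy.
  assert (M0 <= Rabs M0) by apply RRle_abs. assert (0 <= Rabs M0) by apply Rabs_pos.
  destruct (HM (- Rabs M0) y) as [v1 [[p1 e1] h1]]. lra. lra.
  destruct (HM (- Rabs M0) x) as [v2 [[p2 e2] h2]]. lra. lra.
  revert pr. unfold rhoa, gg. intro pr.
  assert (RiemannInt p2 + RiemannInt pr = RiemannInt p1) by apply RiemannInt_P26.
  apply Rabs_def2 in h1. apply Rabs_def2 in h2. lra.
Qed.
Lemma tail_m eps : 0 < eps -> exists M, forall x y (pr : Riemann_integrable rhoa x y),
  y <= M -> x <= y -> RiemannInt pr <= eps.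
Proof.
  intros he. destruct (hI (eps/2)) as [M0 HM]. lra.
  exists (- Rabs M0). intros x y pr hy hxy.
  assert (M0 <= Rabs M0) by apply RRle_abs. assert (0 <= Rabs M0) by apply Rabs_pos.
  destruct (HM x (Rabs M0)) as [v1 [[p1 e1] h1]]. lra. lra.
  destruct (HM y (Rabs M0)) as [v2 [[p2 e2] h2]]. lra. lra.
  revert pr. unfold rhoa, gg. intro pr.
  assert (RiemannInt pr + RiemannInt p2 = RiemannInt p1) by apply RiemannInt_P26.
  apply Rabs_def2 in h1. apply Rabs_def2 in h2. lra.
Qed.

Lemma w1_cmp m a b : 0 < m -> a <= b -> (forall t, a <= t <= b -> m <= gg t) ->
  (forall (pr : Riemann_integrable rhoa a b), Rabs (w1 a - w1 b) <= / m * RiemannInt pr).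
Proof.
  intros hm hab hg pr.
  assert (k1 : forall t, a <= t <= b -> 0 <= w2 t + / m * rhoa t).
  { intros t ht. unfold rhoa. rewrite Rabs_mult, (Rabs_right (gg t)) by (left; apply gg_pos).
    specialize (hg t ht). assert (0 <= Rabs (w2 t)) by apply Rabs_pos.
    assert (m * Rabs (w2 t) <= gg t * Rabs (w2 t)) by nra.
    assert (Rabs (w2 t) <= / m * (gg t * Rabs (w2 t))).
    { apply Rmult_le_reg_l with m; auto. rewrite <- Rmult_assoc, Rinv_r, Rmult_1_l; lra. }
    pose proof (Rle_abs (- w2 t)) as H3. rewrite Rabs_Ropp in H3. lra. }
  assert (k2' : forall t, a <= t <= b -> 0 <= - w2 t + / m * rhoa t).
  { intros t ht. unfold rhoa. rewrite Rabs_mult, (Rabs_right (gg t)) by (left; apply gg_pos).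
    specialize (hg t ht). assert (0 <= Rabs (w2 t)) by apply Rabs_pos.
    assert (m * Rabs (w2 t) <= gg t * Rabs (w2 t)) by nra.
    assert (Rabs (w2 t) <= / m * (gg t * Rabs (w2 t))).
    { apply Rmult_le_reg_l with m; auto. rewrite <- Rmult_assoc, Rinv_r, Rmult_1_l; lra. }
    pose proof (Rle_abs (w2 t)). lra. }
  assert (0 <= / m) by (left; apply Rinv_0_lt_compat; auto).
  pose proof (cmp w1 w2 rhoa (/ m) a b pr hab H (fun x => rho_cont x) hw2 k1).
  pose proof (cmp (fun y => - w1 y) (fun y => - w2 y) rhoa (/ m) a b pr hab H (fun x => rho_cont x)
    (fun x => dopp _ _ _ (hw2 x)) k2').
  apply Rabs_le. lra.
Qed.

Lemma w1_limp : lim_pinf w1 0.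
Proof.
  intros eps he. assert (hg0 := gam_pos).
  destruct gg_lowp as [M1 H1].
  destruct (gg_limp (eps/4)) as [M2 H2]. lra.
  destruct (tail_p (eps * (gam/2) / 2)) as [M3 H3]. apply Rdiv_lt_0_compat; nra.
  exists (Rmax M1 (Rmax M2 M3)). intros x hx. rewrite Rminus_0_r.
  assert (M1 <= x /\ M2 <= x /\ M3 <= x) as (hx1 & hx2 & hx3).
  { pose proof (Rmax_l M1 (Rmax M2 M3)). pose proof (Rmax_r M1 (Rmax M2 M3)).
    pose proof (Rmax_l M2 M3). pose proof (Rmax_r M2 M3). lra. }
  destruct (MVT_cor2 gg w1 x (x+1)) as [z [hz1 hz2]]. lra. intros; apply Dgg.
  replace (x + 1 - x) with 1 in hz1 by ring. rewrite Rmult_1_r in hz1.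
  assert (a1 := H2 x hx2). assert (a2 := H2 (x+1) ltac:(lra)).
  apply Rabs_def2 in a1. apply Rabs_def2 in a2.
  assert (Rabs (w1 z) < eps / 2) by (apply Rabs_def1; lra).
  pose proof (rhoa_int x z ltac:(lra)) as pr.
  assert (Rabs (w1 x - w1 z) <= / (gam/2) * RiemannInt pr).
  { apply w1_cmp. lra. lra. intros; apply H1; lra. }
  assert (RiemannInt pr <= eps * (gam / 2) / 2) by (apply H3; lra).
  assert (/ (gam/2) * RiemannInt pr <= eps / 2).
  { apply Rmult_le_reg_l with (gam/2). lra. rewrite <- Rmult_assoc, Rinv_r, Rmult_1_l by lra. lra. }
  replace (w1 x) with (w1 z + (w1 x - w1 z)) by ring.
  eapply Rle_lt_trans. apply Rabs_triang. lra.
Qed.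

Lemma w1_limm : lim_minf w1 0.
Proof.
  intros eps he. assert (hg0 := gam_pos).
  destruct gg_lowm as [M1 H1].
  destruct (gg_limm (eps/4)) as [M2 H2]. lra.
  destruct (tail_m (eps * (gam/2) / 2)) as [M3 H3]. apply Rdiv_lt_0_compat; nra.
  exists (Rmin M1 (Rmin M2 M3)). intros x hx. rewrite Rminus_0_r.
  assert (x <= M1 /\ x <= M2 /\ x <= M3) as (hx1 & hx2 & hx3).
  { pose proof (Rmin_l M1 (Rmin M2 M3)). pose proof (Rmin_r M1 (Rmin M2 M3)).
    pose proof (Rmin_l M2 M3). pose proof (Rmin_r M2 M3). lra. }
  destruct (MVT_cor2 gg w1 (x-1) x) as [z [hz1 hz2]]. lra. intros; apply Dgg.
  replace (x - (x - 1)) with 1 in hz1 by ring. rewrite Rmult_1_r in hz1.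
  assert (a1 := H2 x hx2). assert (a2 := H2 (x-1) ltac:(lra)).
  apply Rabs_def2 in a1. apply Rabs_def2 in a2.
  assert (Rabs (w1 z) < eps / 2) by (apply Rabs_def1; lra).
  pose proof (rhoa_int z x ltac:(lra)) as pr.
  assert (Rabs (w1 z - w1 x) <= / (gam/2) * RiemannInt pr).
  { apply w1_cmp. lra. lra. intros; apply H1; lra. }
  assert (RiemannInt pr <= eps * (gam / 2) / 2) by (apply H3; lra).
  assert (/ (gam/2) * RiemannInt pr <= eps / 2).
  { apply Rmult_le_reg_l with (gam/2). lra. rewrite <- Rmult_assoc, Rinv_r, Rmult_1_l by lra. lra. }
  replace (w1 x) with (w1 z - (w1 z - w1 x)) by ring.
  unfold Rminus at 1. eapply Rle_lt_trans. apply Rabs_triang. rewrite Rabs_Ropp. lra.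
Qed.
End G.

Lemma limp_fext f h l : (forall x, f x = h x) -> lim_pinf f l -> lim_pinf h l.
Proof. intros E H. replace h with f; [exact H|]. apply functional_extensionality; exact E. Qed.
Lemma limm_fext f h l : (forall x, f x = h x) -> lim_minf f l -> lim_minf h l.
Proof. intros E H. replace h with f; [exact H|]. apply functional_extensionality; exact E. Qed.

Definition MM k a b x := a * cos (k * x) + b * sin (k * x).
Definition MM1 k a b x := k * (- a * sin (k * x) + b * cos (k * x)).

Lemma DMM k a b x : D (MM k a b) x (MM1 k a b x).
Proof. unfold MM, MM1. eapply dext. apply dplus; apply dmul; try apply dconst. apply dcos. apply dsin.
  cbv beta; ring. Qed.
Lemma DMM1 k a b x : D (MM1 k a b) x (- k^2 * MM k a b x).
Proof. unfold MM, MM1. eapply dext. apply dmul. apply dconst.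
  apply dplus; apply dmul; try apply dconst. apply dsin. apply dcos. cbv beta; ring. Qed.

Lemma MM_bound k a b x : Rabs (MM k a b x) <= Rabs a + Rabs b.
Proof.
  unfold MM. eapply Rle_trans. apply Rabs_triang. rewrite !Rabs_mult.
  pose proof (COS_bound (k*x)). pose proof (SIN_bound (k*x)).
  assert (Rabs (cos (k*x)) <= 1) by (apply Rabs_le; lra).
  assert (Rabs (sin (k*x)) <= 1) by (apply Rabs_le; lra).
  pose proof (Rabs_pos a). pose proof (Rabs_pos b).
  pose proof (Rabs_pos (cos (k*x))). pose proof (Rabs_pos (sin (k*x))). nra.
Qed.

Section Asym.
Variables (k2 u u1 u2 : R -> R) (k a b : R).
Hypothesis hk : 0 < k.
Hypothesis h1 : forall x, D u x (u1 x).
Hypothesis h2 : forall x, D u1 x (u2 x).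
Hypothesis h3 : forall x, u2 x + k2 x * u x = 0.

Lemma p2_bound x : Rabs ((u2 x - - k^2 * MM k a b x)) <=
   k^2 * Rabs (u x - MM k a b x) + Rabs (k2 x - k^2) * (Rabs (u x - MM k a b x) + (Rabs a + Rabs b)).
Proof.
  replace (u2 x - - k^2 * MM k a b x) with (- k^2 * (u x - MM k a b x) - (k2 x - k^2) * ((u x - MM k a b x) + MM k a b x))
    by (pose proof (h3 x); assert (u2 x = - k2 x * u x) by lra; rewrite H0; ring).
  pose proof (MM_bound k a b x).
  unfold Rminus at 1. eapply Rle_trans. apply Rabs_triang. rewrite Rabs_Ropp, !Rabs_mult.
  assert (Rabs (- k^2) = k^2). { rewrite Rabs_Ropp. apply Rabs_right. left; apply pow_lt; auto. }
  rewrite H0.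
  pose proof (Rabs_triang (u x - MM k a b x) (MM k a b x)).
  pose proof (Rabs_pos (k2 x - k^2)). nra.
Qed.

Lemma asym_p : lim_pinf k2 (k^2) -> lim_pinf (fun x => u x - MM k a b x) 0 ->
  Un_cv (fun n => u (sp k n)) a /\ Un_cv (fun n => u1 (sp k n)) (k * b).
Proof.
  intros hl hu.
  assert (hk2 : lim_pinf (fun x => k2 x - k^2) 0).
  { intros e he. destruct (hl e he) as [M HM]. exists M. intros. rewrite Rminus_0_r. auto. }
  assert (hp2 : lim_pinf (fun x => u2 x - - k^2 * MM k a b x) 0).
  { apply (small_pinf (k^2) (Rabs a + Rabs b) (fun x => u x - MM k a b x) (fun x => k2 x - k^2)).
    left; apply pow_lt; auto. pose proof (Rabs_pos a); pose proof (Rabs_pos b); lra.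
    intro; apply p2_bound. exact hu. exact hk2. }
  assert (hp1 : lim_pinf (fun x => u1 x - MM1 k a b x) 0).
  { apply (landau_pinf (fun x => u x - MM k a b x) _ (fun x => u2 x - - k^2 * MM k a b x)); auto.
    intro; apply dminus; auto. apply DMM. intro; apply dminus; auto. apply DMM1. }
  split.
  - pose proof (seq_pinf (sp k) _ _ (sp_div k hk) hu) as H.
    apply cv_ext with (0 + a); [|ring].
    apply (cv_fext (fun n => (u (sp k n) - MM k a b (sp k n)) + a)).
    { intro n. unfold MM. rewrite sp_cos, sp_sin by auto. ring. }
    apply CV_plus; auto. apply cv_const.
  - pose proof (seq_pinf (sp k) _ _ (sp_div k hk) hp1) as H.
    apply cv_ext with (0 + k * b); [|ring].
    apply (cv_fext (fun n => (u1 (sp k n) - MM1 k a b (sp k n)) + k * b)).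
    { intro n. unfold MM1. rewrite sp_cos, sp_sin by auto. ring. }
    apply CV_plus; auto. apply cv_const.
Qed.

Lemma asym_m : lim_minf k2 (k^2) -> lim_minf (fun x => u x - MM k a b x) 0 ->
  Un_cv (fun n => u (- sp k n)) a /\ Un_cv (fun n => u1 (- sp k n)) (k * b).
Proof.
  intros hl hu.
  assert (hk2 : lim_minf (fun x => k2 x - k^2) 0).
  { intros e he. destruct (hl e he) as [M HM]. exists M. intros. rewrite Rminus_0_r. auto. }
  assert (hp2 : lim_minf (fun x => u2 x - - k^2 * MM k a b x) 0).
  { apply (small_minf (k^2) (Rabs a + Rabs b) (fun x => u x - MM k a b x) (fun x => k2 x - k^2)).
    left; apply pow_lt; auto. pose proof (Rabs_pos a); pose proof (Rabs_pos b); lra.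
    intro; apply p2_bound. exact hu. exact hk2. }
  assert (hp1 : lim_minf (fun x => u1 x - MM1 k a b x) 0).
  { apply (landau_minf (fun x => u x - MM k a b x) _ (fun x => u2 x - - k^2 * MM k a b x)); auto.
    intro; apply dminus; auto. apply DMM. intro; apply dminus; auto. apply DMM1. }
  split.
  - pose proof (seq_minf (fun n => - sp k n) _ _ (sm_div k hk) hu) as H.
    apply cv_ext with (0 + a); [|ring].
    apply (cv_fext (fun n => (u (- sp k n) - MM k a b (- sp k n)) + a)).
    { intro n. unfold MM. rewrite sm_cos, sm_sin by auto. ring. }
    apply CV_plus; auto. apply cv_const.
  - pose proof (seq_minf (fun n => - sp k n) _ _ (sm_div k hk) hp1) as H.
    apply cv_ext with (0 + k * b); [|ring].
    apply (cv_fext (fun n => (u1 (- sp k n) - MM1 k a b (- sp k n)) + k * b)).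
    { intro n. unfold MM1. rewrite sm_cos, sm_sin by auto. ring. }
    apply CV_plus; auto. apply cv_const.
Qed.
End Asym.

Lemma const_of_D0 f : (forall x, D f x 0) -> forall x y, f x = f y.
Proof.
  intros H x y. destruct (Rtotal_order x y) as [h|[h|h]].
  - destruct (MVT_cor2 f (fun _ => 0) x y h) as [c [hc _]]. intros; apply H. lra.
  - subst; auto.
  - destruct (MVT_cor2 f (fun _ => 0) y x h) as [c [hc _]]. intros; apply H. lra.
Qed.

Lemma cv_le u v l1 l2 e : Un_cv u l1 -> Un_cv v l2 -> (exists N, forall n, (n >= N)%nat -> u n <= v n + e) ->
  l1 <= l2 + e.
Proof.
  intros hu hv [N HN]. destruct (Rle_dec l1 (l2 + e)) as [h|h]; auto. exfalso.
  set (d := (l1 - l2 - e) / 2). assert (0 < d) by (unfold d; lra).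
  destruct (hu d H) as [N1 H1]. destruct (hv d H) as [N2 H2].
  set (n := (N + N1 + N2)%nat).
  specialize (HN n ltac:(unfold n; lia)). specialize (H1 n ltac:(unfold n; lia)).
  specialize (H2 n ltac:(unfold n; lia)). unfold Rdist in *.
  apply Rabs_def2 in H1. apply Rabs_def2 in H2. unfold d in *. lra.
Qed.

Lemma cv_pow2 u l : Un_cv u l -> Un_cv (fun n => u n ^ 2) (l ^ 2).
Proof. intro H. apply (cv_fext (fun n => u n * u n)). intro; ring.
  apply cv_ext with (l * l). apply CV_mult; auto. ring. Qed.

Ltac cvstep := first [ apply cv_const | eassumption | apply cv_pow2 | apply CV_minus | apply CV_plus
  | apply CV_mult | apply cv_inv ].

Lemma final_alg s I T : 0 <= s -> T = 1 - s ^ 2 -> (1 + s) ^ 2 <= exp I * T ->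
  T >= (sech (I / 2)) ^ 2.
Proof.
  intros hs hT hin.
  set (q := exp (I / 2)). assert (hq : 0 < q) by apply exp_pos.
  assert (he : exp I = q * q). { unfold q. rewrite <- exp_plus. f_equal. field. }
  assert (hsech : sech (I / 2) ^ 2 = 4 * (q * q) / (q * q + 1) ^ 2).
  { unfold sech, cosh. rewrite exp_Ropp. fold q. field. split; nra. }
  rewrite hsech. rewrite he in hin. set (e := q * q) in *.
  assert (0 < e) by (unfold e; nra).
  assert (1 + s <= e * (1 - s)).
  { rewrite hT in hin. assert ((1+s) * (1+s) <= (e * (1 - s)) * (1 + s)) by nra. nra. }
  assert (s * (e + 1) <= e - 1) by nra.
  assert (s <= (e - 1) / (e + 1)).
  { apply Rmult_le_reg_r with (e + 1). lra. unfold Rdiv. rewrite Rmult_assoc, Rinv_l by lra. lra. }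
  assert (s ^ 2 <= ((e - 1) / (e + 1)) ^ 2) by (apply pow_incr; lra).
  assert (1 - ((e - 1) / (e + 1)) ^ 2 = 4 * e / (e + 1) ^ 2) by (field; lra).
  lra.
Qed.

Lemma exp_le x y : x <= y -> exp x <= exp y.
Proof. intros [h| ->]; [left; apply exp_increasing; auto| right; reflexivity]. Qed.

Lemma eps_le a b : (forall eps, 0 < eps -> a <= b + eps) -> a <= b.
Proof. intro H. destruct (Rle_dec a b) as [h|h]; auto. exfalso.
  specialize (H ((a - b)/2) ltac:(lra)). lra. Qed.

Lemma abs_cond A Q S : 0 < S -> Q ^ 2 <= S ^ 2 -> 0 <= - A * Q / S + 1 * Rabs A.
Proof.
  intros hS hQ.
  assert (Rabs Q <= Rabs S) by (apply Rsqr_le_abs_0; unfold Rsqr; nra).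
  rewrite (Rabs_right S) in H by lra.
  assert (A * Q <= Rabs A * Rabs Q) by (rewrite <- Rabs_mult; apply Rle_abs).
  assert (Rabs A * Rabs Q <= Rabs A * S) by (apply Rmult_le_compat_l; auto; apply Rabs_pos).
  assert (- A * Q / S = - (A * Q) / S) by (field; lra). rewrite H2.
  apply Rmult_le_reg_r with S; auto.
  replace ((- (A * Q) / S + 1 * Rabs A) * S) with (Rabs A * S - A * Q) by (field; lra). lra.
Qed.

Theorem mainTheorem10
  (k2 : R -> R) (kinf : R) (hkinf : 0 < kinf)
  (hlimp : lim_pinf k2 (kinf ^ 2)) (hlimm : lim_minf k2 (kinf ^ 2))
  (hintp : integrable_near_pinf (fun x => k2 x - kinf ^ 2))
  (hintm : integrable_near_minf (fun x => k2 x - kinf ^ 2))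
  (hpos : forall x, 0 < k2 x)
  (hC2 : C2 (fun x => sqrt (k2 x)))
  (w1 w2 : R -> R)
  (hw1 : forall x, derivable_pt_lim (fun y => / sqrt (sqrt (k2 y))) x (w1 x))
  (hw2 : forall x, derivable_pt_lim w1 x (w2 x))
  (ur ui ur1 ui1 ur2 ui2 : R -> R) (rr ri tr ti : R)
  (hsol : is_solution k2 ur ui ur1 ui1 ur2 ui2)
  (hleft : left_asymptotics kinf rr ri ur ui)
  (hright : right_asymptotics kinf tr ti ur ui)
  (I : R)
  (hI : improper_integral
          (fun x => Rabs (/ sqrt (sqrt (k2 x)) * w2 x)) I) :
  transmission kinf kinf tr ti >= (sech (I / 2)) ^ 2.
Proof.
  set (g := gg k2).
  assert (hg : forall x, 0 < g x) by (intro; apply gg_pos; auto).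
  assert (hk4 : forall x, k2 x * g x ^ 4 = 1) by (intro; apply gg4; auto).
  assert (Dg : forall x, D g x (w1 x)) by exact hw1.
  set (E := EE g w1 ur ui ur1 ui1).
  set (Cf := CC ur ui ur1 ui1).
  assert (DE : forall x, D E x (- (g x * w2 x) * DQ g w1 ur ui ur1 ui1 x))
    by (intro; apply (DEE k2 g w1 w2 ur ui ur1 ui1 ur2 ui2); auto).
  assert (hC : forall x, Cf x = Cf 0) by (intros; apply const_of_D0; intro; apply (DCC k2 _ _ _ _ ur2 ui2); auto).
  set (c := Cf 0).
  assert (s1 : forall x, D ur x (ur1 x)) by (intro x; destruct (hsol x) as (?&?&?&?&?&?); auto).
  assert (s2 : forall x, D ur1 x (ur2 x)) by (intro x; destruct (hsol x) as (?&?&?&?&?&?); auto).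
  assert (s3 : forall x, D ui x (ui1 x)) by (intro x; destruct (hsol x) as (?&?&?&?&?&?); auto).
  assert (s4 : forall x, D ui1 x (ui2 x)) by (intro x; destruct (hsol x) as (?&?&?&?&?&?); auto).
  assert (s5 : forall x, ur2 x + k2 x * ur x = 0) by (intro x; destruct (hsol x) as (?&?&?&?&?&?); auto).
  assert (s6 : forall x, ui2 x + k2 x * ui x = 0) by (intro x; destruct (hsol x) as (?&?&?&?&?&?); auto).
  destruct hright as [hr1 hr2]. destruct hleft as [hl1 hl2].
  destruct (asym_p k2 ur ur1 ur2 kinf tr (- ti)) as [Pur Pur1]; auto.
  { revert hr1. apply limp_fext. intro; unfold MM; ring. }
  destruct (asym_p k2 ui ui1 ui2 kinf ti tr) as [Pui Pui1]; auto.
  destruct (asym_m k2 ur ur1 ur2 kinf (1 + rr) ri) as [Mur Mur1]; auto.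
  { revert hl1. apply limm_fext. intro; unfold MM; ring. }
  destruct (asym_m k2 ui ui1 ui2 kinf ri (1 - rr)) as [Mui Mui1]; auto.
  { revert hl2. apply limm_fext. intro; unfold MM; ring. }
  assert (Pg : Un_cv (fun n => g (sp kinf n)) (gam kinf))
    by (apply seq_pinf; [apply sp_div; auto| apply gg_limp; auto]).
  assert (Mg : Un_cv (fun n => g (- sp kinf n)) (gam kinf))
    by (apply (seq_minf (fun n => - sp kinf n)); [apply sm_div; auto| apply gg_limm; auto]).
  assert (Pw : Un_cv (fun n => w1 (sp kinf n)) 0)
    by (apply seq_pinf; [apply sp_div; auto| exact (w1_limp k2 w1 w2 hpos hC2 hw1 hw2 kinf I hkinf hlimp hI)]).
  assert (Mw : Un_cv (fun n => w1 (- sp kinf n)) 0)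
    by (apply (seq_minf (fun n => - sp kinf n)); [apply sm_div; auto| exact (w1_limm k2 w1 w2 hpos hC2 hw1 hw2 kinf I hkinf hlimm hI)]).
  assert (hgam := gam_pos kinf hkinf).
  set (r := sqrt kinf).
  assert (hr : 0 < r) by (apply sqrt_lt_R0; auto).
  assert (hrr : r * r = kinf) by (apply sqrt_sqrt; lra).
  assert (hgr : gam kinf = / r) by reflexivity.
  set (T := tr ^ 2 + ti ^ 2). set (R2 := rr ^ 2 + ri ^ 2).
  assert (PE : Un_cv (fun n => E (sp kinf n)) (kinf * T)).
  { unfold E, EE, Vf. eapply cv_ext. { repeat cvstep. all: apply Rgt_not_eq; auto. }
    rewrite hgr. unfold T. rewrite <- hrr. field. lra. }
  assert (ME : Un_cv (fun n => E (- sp kinf n)) (kinf * (1 + R2))).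
  { unfold E, EE, Vf. eapply cv_ext. { repeat cvstep. all: apply Rgt_not_eq; auto. }
    rewrite hgr. unfold R2. rewrite <- hrr. field. lra. }
  assert (hcp : c = kinf * T).
  { apply (UL_sequence (fun n => Cf (sp kinf n))).
    - apply (cv_fext (fun _ => c)). intro; symmetry; apply hC. apply cv_const.
    - unfold Cf, CC. eapply cv_ext. { repeat cvstep. } unfold T. ring. }
  assert (hcm : c = kinf * (1 - R2)).
  { apply (UL_sequence (fun n => Cf (- sp kinf n))).
    - apply (cv_fext (fun _ => c)). intro; symmetry; apply hC. apply cv_const.
    - unfold Cf, CC. eapply cv_ext. { repeat cvstep. } unfold R2. ring. }
  assert (hcT : T = 1 - R2) by (apply Rmult_eq_reg_l with kinf; lra).
  assert (hR2 : 0 <= R2) by (unfold R2; nra).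
  set (s := sqrt R2).
  assert (hs : 0 <= s) by apply sqrt_pos.
  assert (hss : s ^ 2 = R2) by (unfold s; apply pow2_sqrt; auto).
  assert (hEC : forall x, c ^ 2 + (DQ g w1 ur ui ur1 ui1 x) ^ 2 <= E x ^ 2).
  { intro x. unfold c. rewrite <- (hC x). pose proof (ineqEE g w1 ur ui ur1 ui1 hg x). unfold E, Cf. lra. }
  assert (hE0 : forall x, 0 <= E x) by (intro; apply EE_nonneg).
  set (Ep := kinf * T) in *. set (Em := kinf * (1 + R2)) in *.
  assert (hT0 : 0 <= T) by (unfold T; nra).
  assert (key : forall dl, 0 < dl -> ln (Em + sqrt (Em ^ 2 - c ^ 2 + dl)) <= ln (Ep + sqrt (Ep ^ 2 - c ^ 2 + dl)) + I).
  { intros dl hdl.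
    set (h := fun e => ln (e + sqrt (e ^ 2 - c ^ 2 + dl))).
    assert (hpos' : forall x, 0 < E x ^ 2 - c ^ 2 + dl).
    { intro x. pose proof (hEC x). pose proof (pow2_ge_0 (DQ g w1 ur ui ur1 ui1 x)). lra. }
    set (S := fun x => sqrt (E x ^ 2 - c ^ 2 + dl)).
    assert (DPh : forall x, D (fun y => h (E y)) x ((- (g x * w2 x) * DQ g w1 ur ui ur1 ui1 x) / S x)).
    { intro x. apply DPhi; auto. }
    assert (cond : forall x, 0 <= (- (g x * w2 x) * DQ g w1 ur ui ur1 ui1 x) / S x + 1 * rhoa k2 w2 x).
    { intro x. apply abs_cond. apply sqrt_lt_R0; auto. unfold S. rewrite pow2_sqrt by (left; auto).
      pose proof (hEC x). lra. }
    assert (Hn : forall eps, 0 < eps -> exists N, forall n, (n >= N)%nat ->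
       h (E (- sp kinf n)) <= h (E (sp kinf n)) + (I + eps)).
    { intros eps he. destruct (hI eps he) as [M HM].
      destruct (sp_div kinf hkinf (Rabs M)) as [N HN]. exists N. intros n hn.
      specialize (HN n hn). assert (M <= Rabs M) by apply RRle_abs. assert (0 <= Rabs M) by apply Rabs_pos.
      destruct (HM (- sp kinf n) (sp kinf n)) as [v [[pr ev] hv]]. lra. lra.
      assert (H1 : h (E (- sp kinf n)) - h (E (sp kinf n)) <= 1 * v).
      { rewrite <- ev. apply (cmp (fun y => h (E y)) (fun x => (- (g x * w2 x) * DQ g w1 ur ui ur1 ui1 x) / S x) (rhoa k2 w2) 1 (- sp kinf n) (sp kinf n) pr).
        lra. lra. exact (rho_cont k2 w1 w2 hpos hC2 hw1 hw2). exact DPh. intros; apply cond. }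
      apply Rabs_def2 in hv. lra. }
    assert (hEm : 0 < Em ^ 2 - c ^ 2 + dl).
    { rewrite hcm. unfold Em. assert (0 <= kinf ^ 2 * R2) by (apply Rmult_le_pos; auto; apply pow2_ge_0). nra. }
    assert (hEp : 0 < Ep ^ 2 - c ^ 2 + dl) by (rewrite hcp; unfold Ep; lra).
    assert (hEm0 : 0 <= Em) by (unfold Em; nra).
    assert (hEp0 : 0 <= Ep) by (unfold Ep; nra).
    assert (cm : continuity_pt h Em).
    { eapply dcont. apply (DPhi (fun y => y)). apply did. exact hEm. exact hEm0. }
    assert (cp : continuity_pt h Ep).
    { eapply dcont. apply (DPhi (fun y => y)). apply did. exact hEp. exact hEp0. }
    pose proof (continuity_seq h _ _ cm ME) as LM.
    pose proof (continuity_seq h _ _ cp PE) as LP.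
    change (h Em <= h Ep + I).
    apply eps_le. intros eps he. destruct (Hn eps he) as [N HN].
    replace (h Ep + I + eps) with (h Ep + (I + eps)) by ring.
    apply (cv_le _ _ _ _ _ LM LP). exists N; auto. }
  assert (hall : forall dl, 0 < dl -> kinf * (1 + s) ^ 2 <= exp I * (kinf * T) + exp I * sqrt dl).
  { intros dl hdl. specialize (key dl hdl).
    assert (a1 : 0 < sqrt (Em ^ 2 - c ^ 2 + dl)).
    { apply sqrt_lt_R0. rewrite hcm. unfold Em. assert (0 <= kinf ^ 2 * R2) by (apply Rmult_le_pos; auto; apply pow2_ge_0). nra. }
    assert (a2 : Ep ^ 2 - c ^ 2 + dl = dl) by (rewrite hcp; unfold Ep; ring).
    rewrite a2 in key.
    assert (a3 : 0 < sqrt dl) by (apply sqrt_lt_R0; auto).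
    assert (hEm0 : 0 <= Em) by (unfold Em; nra).
    apply exp_le in key. rewrite exp_plus in key.
    rewrite (exp_ln (Em + sqrt (Em ^ 2 - c ^ 2 + dl))) in key by lra.
    rewrite (exp_ln (Ep + sqrt dl)) in key by (unfold Ep; nra).
    assert (a4 : 2 * kinf * s <= sqrt (Em ^ 2 - c ^ 2 + dl)).
    { rewrite <- (sqrt_pow2 (2 * kinf * s)) by nra. apply sqrt_le_1_alt.
      rewrite hcm. unfold Em. rewrite <- hss. nra. }
    assert (a5 : kinf * (1 + s) ^ 2 = Em + 2 * kinf * s) by (unfold Em; rewrite <- hss; ring).
    unfold Ep in key. lra. }
  assert (fin : (1 + s) ^ 2 <= exp I * T).
  { assert (he : 0 < exp I) by apply exp_pos.
    assert (kinf * (1 + s) ^ 2 <= exp I * (kinf * T)).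
    { apply eps_le. intros eps hep.
      specialize (hall ((eps / exp I) ^ 2) ltac:(apply pow_lt; apply Rdiv_lt_0_compat; auto)).
      rewrite sqrt_pow2 in hall by (left; apply Rdiv_lt_0_compat; auto).
      replace (exp I * (eps / exp I)) with eps in hall by (field; lra). exact hall. }
    apply Rmult_le_reg_l with kinf; auto. lra. }
  unfold transmission. replace (kinf / kinf * (tr ^ 2 + ti ^ 2)) with T by (unfold T; field; lra).
  apply (final_alg s I T); auto. rewrite hss; auto.
Qed.
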